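(* Let $p\ge 1$ and $c>0$ be constants. For $a>0$ let $x_a:[0,\infty)\to\mathbb{R}$ be the unique solution of $$x'''+c\,x^p\, x''=0,\qquad x(0)=0=x'(0),\quad x''(0)=a,$$ and let $h(a):=\lim_{t\to\infty}x_a'(t)$ (which exists and is finite). Define $$c_2:=\Gamma\!\left(\tfrac{1}{2p+1}\right)\left(\frac{2^p}{c\,(2p+1)^{2p}}\right)^{\frac{1}{2p+1}},\qquad c_3:=\Gamma\!\left(\tfrac{2}{2p+1}\right)(2p+1)^{\frac{1-2p}{2p+1}}\left(\frac{2^p}{c}\right)^{\frac{2}{2p+1}},$$ $$c_1:=\frac{c_3}{c_2}+\frac{\Gamma\big(1/(p+1)\big)}{c^{1/(p+1)}\,\big(c_2(p+1)\big)^{p/(p+1)}}.$$ Then for every $a>0$, $$c_2\, a^{(p+1)/(2p+1)}\le h(a)\le c_1\, a^{(p+1)/(2p+1)}.$$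
   Context: $\Gamma$ denotes the Euler Gamma function. *)

(* Defs.v *)
From Stdlib Require Import Reals.
From Coquelicot Require Import Coquelicot.
Open Scope R_scope.

Definition Gamma (s : R) : R :=
  RInt_gen (fun t => Rpower t (s - 1) * exp (- t))
           (at_right 0) (Rbar_locally p_infty).

(* x^p for real exponent p >= 1; convention: 0 for x <= 0
   (the solutions considered are > 0 on (0,oo), x(0)=0, so this only fixes 0^p = 0). *)
Definition rpow (x p : R) : R :=
  if Rlt_dec 0 x then Rpower x p else 0.

Definition is_solution (p c a : R) (x x1 x2 : R -> R) : Prop :=
  (forall t, 0 < t -> is_derive x t (x1 t)) /\
  (forall t, 0 < t -> is_derive x1 t (x2 t)) /\
  (forall t, 0 < t -> is_derive x2 t (- (c * rpow (x t) p * x2 t))) /\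
  filterlim x (at_right 0) (locally (x 0)) /\
  filterlim x1 (at_right 0) (locally (x1 0)) /\
  filterlim x2 (at_right 0) (locally (x2 0)) /\
  x 0 = 0 /\ x1 0 = 0 /\ x2 0 = a.

Definition const2 (p c : R) : R :=
  Gamma (1 / (2 * p + 1)) *
  Rpower (Rpower 2 p / (c * Rpower (2 * p + 1) (2 * p))) (1 / (2 * p + 1)).

Definition const3 (p c : R) : R :=
  Gamma (2 / (2 * p + 1)) *
  Rpower (2 * p + 1) ((1 - 2 * p) / (2 * p + 1)) *
  Rpower (Rpower 2 p / c) (2 / (2 * p + 1)).

Definition const1 (p c : R) : R :=
  const3 p c / const2 p c +
  Gamma (1 / (p + 1)) /
    (Rpower c (1 / (p + 1)) * Rpower (const2 p c * (p + 1)) (p / (p + 1))).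

(* Main.v *)
Require Import Defs.
From Stdlib Require Import Reals Lra Lia.
From Coquelicot Require Import Coquelicot.
Open Scope R_scope.

Lemma deriv_eq (f : R -> R) (x l l2 : R) : is_derive f x l -> @eq R l l2 -> is_derive f x l2.
Proof. intros H ->; exact H. Qed.

Lemma ball_R (x y e : R) : ball x e y <-> Rabs (y - x) < e.
Proof. unfold ball; simpl; unfold AbsRing_ball, abs, minus, plus, opp; simpl. tauto. Qed.

Lemma deriv_cont (f : R -> R) x l : is_derive f x l -> continuity_pt f x.
Proof.
  intros H. apply continuity_pt_filterlim. apply (ex_derive_continuous f x).
  exists l; exact H.
Qed.

Lemma mono_open (f df : R -> R) a :
  (forall t, a < t -> is_derive f t (df t)) -> (forall t, a < t -> 0 <= df t) ->
  forall s t, a < s -> s <= t -> f s <= f t.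
Proof.
  intros Hd Hp s t Hs Hst.
  destruct (MVT_gen f s t df) as [c [Hc Heq]].
  - intros x Hx. apply Hd. unfold Rmin in Hx; destruct (Rle_dec s t); lra.
  - intros x Hx. apply (deriv_cont f x (df x)). apply Hd.
    unfold Rmin in Hx; destruct (Rle_dec s t); lra.
  - assert (0 <= df c).
    { apply Hp. unfold Rmin in Hc; destruct (Rle_dec s t); lra. }
    assert (0 <= df c * (t - s)) by (apply Rmult_le_pos; lra). lra.
Qed.

Lemma mono_gen (f df : R -> R) a :
  (forall t, a < t -> is_derive f t (df t)) -> (forall t, a < t -> 0 <= df t) ->
  filterlim f (at_right a) (locally (f a)) ->
  forall s t, a <= s -> s <= t -> f s <= f t.
Proof.
  intros Hd Hp Hc s t Hs Hst.
  destruct (Rlt_or_le a s) as [Has|Has].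
  - apply (mono_open f df a Hd Hp); lra.
  - assert (s = a) by lra. subst s.
    destruct (Rle_or_lt (f a) (f t)) as [H|H]; [exact H|exfalso].
    assert (Hat : a < t). { destruct (Req_dec a t) as [E|E]; [subst; lra| lra]. }
    pose (eps := mkposreal _ (proj2 (Rlt_0_minus _ _) H)).
    destruct (proj1 (filterlim_locally f (f a)) Hc eps) as [d Hdl].
    set (y := Rmin (a + d / 2) t).
    assert (Hy1 : a < y). { unfold y, Rmin; destruct (Rle_dec (a + d/2) t); destruct d; simpl in *; lra. }
    assert (Hy2 : y <= t). { unfold y; apply Rmin_r. }
    assert (Hy3 : y <= a + d/2). { unfold y; apply Rmin_l. }
    assert (Hb : ball a d y). { apply ball_R. destruct d; simpl in *. rewrite Rabs_pos_eq; lra. }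
    specialize (Hdl y Hb Hy1). apply ball_R in Hdl. simpl in Hdl.
    assert (f y <= f t) by (apply (mono_open f df a Hd Hp); lra).
    apply Rabs_lt_between in Hdl. unfold eps in Hdl; simpl in Hdl. unfold minus, plus, opp in Hdl; simpl in Hdl. lra.
Qed.

Lemma cont_right (f : R -> R) a : continuous f a -> filterlim f (at_right a) (locally (f a)).
Proof.
  intros H. intros P HP. apply H in HP. destruct HP as [d Hd]. exists d. intros y Hy _. now apply Hd.
Qed.

Lemma deriv_right (f : R -> R) a l : is_derive f a l -> filterlim f (at_right a) (locally (f a)).
Proof. intros H. apply (cont_right f a). apply (ex_derive_continuous (K:=R_AbsRing) (V:=R_NormedModule) f a). exists l; exact H. Qed.

Lemma lim_of_mono (f : R -> R) B :
  (forall s t, 0 <= s -> s <= t -> f s <= f t) -> (forall t, 0 <= t -> f t <= B) ->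
  exists l : R, is_lim f p_infty l /\ (forall t, 0 <= t -> f t <= l).
Proof.
  intros Hm Hb.
  set (E := fun y => exists t, 0 <= t /\ y = f t).
  assert (HB : bound E). { exists B. intros y [t [Ht ->]]. now apply Hb. }
  assert (HE : exists y, E y). { exists (f 0). exists 0. split; [lra|reflexivity]. }
  destruct (completeness E HB HE) as [l [Hub Hlub]].
  assert (Hle : forall t, 0 <= t -> f t <= l). { intros t Ht. apply Hub. exists t; split; auto. }
  exists l. split; [|exact Hle].
  unfold is_lim. simpl. apply (proj2 (filterlim_locally f l)).
  intros eps.
  assert (Hex : exists t0, 0 <= t0 /\ l - eps < f t0).
  { destruct (Classical_Prop.classic (exists t0, 0 <= t0 /\ l - eps < f t0)) as [H|H]; auto.
    exfalso. assert (l <= l - eps).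
    { apply Hlub. intros y [t [Ht ->]]. destruct (Rle_or_lt (f t) (l - eps)); auto.
      exfalso; apply H; exists t; auto. }
    destruct eps; simpl in *; lra. }
  destruct Hex as [t0 [Ht0 Hf0]].
  exists t0. intros t Ht. apply ball_R.
  assert (f t0 <= f t) by (apply Hm; lra). assert (f t <= l) by (apply Hle; lra).
  apply Rabs_lt_between. destruct eps; simpl in *; lra.
Qed.

Lemma lim_le (f g : R -> R) (l m t0 : R) :
  is_lim f p_infty l -> is_lim g p_infty m -> (forall t, t0 <= t -> f t <= g t) -> l <= m.
Proof.
  intros Hf Hg H. assert (Rbar_le l m). { apply (is_lim_le_loc f g p_infty); auto.
  exists t0. intros; apply H; lra. } exact H0.
Qed.

Lemma ballR1 (x y e : R) : ball x e y -> Rabs (y - x) < e.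
Proof. apply ball_R. Qed.
Lemma ballR2 (x y e : R) : Rabs (y - x) < e -> ball x e y.
Proof. apply ball_R. Qed.

Lemma Rpower_pos x y : 0 < Rpower x y.
Proof. unfold Rpower; apply exp_pos. Qed.

Lemma rpow_pos x r : 0 < x -> rpow x r = Rpower x r.
Proof. intros H; unfold rpow; destruct (Rlt_dec 0 x); [reflexivity|lra]. Qed.

Lemma rpow_nonpos x r : x <= 0 -> rpow x r = 0.
Proof. intros H; unfold rpow; destruct (Rlt_dec 0 x); [lra|reflexivity]. Qed.

Lemma rpow_ge0 x r : 0 <= rpow x r.
Proof. unfold rpow; destruct (Rlt_dec 0 x); [left; apply Rpower_pos|lra]. Qed.

Lemma Rpower_le_base x y r : 0 < x -> x <= y -> 0 <= r -> Rpower x r <= Rpower y r.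
Proof.
  intros Hx Hxy Hr. unfold Rpower. destruct Hxy as [Hlt|Heq]; [|subst; lra].
  assert (ln x < ln y) by (apply ln_increasing; lra).
  destruct Hr as [Hr|Hr]; [|subst; rewrite !Rmult_0_l; lra].
  left. apply exp_increasing. apply Rmult_lt_compat_l; lra.
Qed.

Lemma Rpower_lt_base x y r : 0 < x -> x < y -> 0 < r -> Rpower x r < Rpower y r.
Proof.
  intros Hx Hxy Hr. unfold Rpower.
  assert (ln x < ln y) by (apply ln_increasing; lra).
  apply exp_increasing. apply Rmult_lt_compat_l; lra.
Qed.

Lemma rpow_le x y r : x <= y -> 0 <= r -> rpow x r <= rpow y r.
Proof.
  intros Hxy Hr. destruct (Rle_or_lt x 0) as [Hx|Hx].
  - rewrite rpow_nonpos by lra. apply rpow_ge0.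
  - rewrite !rpow_pos by lra. now apply Rpower_le_base.
Qed.

Lemma Rpower_deriv x r : 0 < x -> is_derive (fun y => Rpower y r) x (r * Rpower x (r - 1)).
Proof. intros H. apply is_derive_Reals. now apply derivable_pt_lim_power. Qed.

Lemma locally_pos x : 0 < x -> locally x (fun y => 0 < y).
Proof.
  intros H. exists (mkposreal x H). intros y Hy. apply ballR1 in Hy. simpl in Hy.
  apply Rabs_lt_between in Hy. lra.
Qed.

Lemma locally_neg x : x < 0 -> locally x (fun y => y < 0).
Proof.
  intros H. assert (0 < - x) by lra. exists (mkposreal (-x) H0). intros y Hy. apply ballR1 in Hy. simpl in Hy.
  apply Rabs_lt_between in Hy. lra.
Qed.

Lemma rpow_deriv x r : 0 < x -> is_derive (fun y => rpow y r) x (r * Rpower x (r - 1)).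
Proof.
  intros H. apply (is_derive_ext_loc (fun y => Rpower y r)).
  - apply (filter_imp (fun y => 0 < y)); [|now apply locally_pos].
    intros y Hy. now rewrite rpow_pos.
  - now apply Rpower_deriv.
Qed.

Lemma Rpower_le_self y r : 0 < y -> y <= 1 -> 1 <= r -> Rpower y r <= y.
Proof.
  intros H1 H2 H3. unfold Rpower. rewrite <- (exp_ln y) at 2 by lra.
  assert (ln y <= 0). { destruct H2 as [H2|H2]. left. rewrite <- ln_1. apply ln_increasing; lra. subst; rewrite ln_1; lra. }
  destruct (Rle_lt_or_eq_dec _ _ H) as [Hl|Hl].
  - destruct H3 as [H3|H3]. left. apply exp_increasing. assert (0 < (r-1) * (- ln y)) by (apply Rmult_lt_0_compat; lra). assert (r * ln y - ln y = -((r-1) * (- ln y))) by ring. lra. subst; rewrite Rmult_1_l; lra.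
  - rewrite Hl. rewrite Rmult_0_r. lra.
Qed.

Lemma rpow_cont r x : 1 <= r -> continuous (fun y => rpow y r) x.
Proof.
  intros Hr. destruct (Rtotal_order x 0) as [Hx|[Hx|Hx]].
  - apply (continuous_ext_loc (fun y => rpow y r) (fun _ => 0)).
    + apply (filter_imp (fun y => y < 0)); [|now apply locally_neg].
      intros y Hy. now rewrite rpow_nonpos by lra.
    + apply continuous_const.
  - subst x. intros P [e He]. exists (mkposreal (Rmin 1 e) (Rmin_pos _ _ Rlt_0_1 (cond_pos e))).
    intros y Hy. apply He. rewrite (rpow_nonpos 0 r) by lra. apply ballR1 in Hy; apply ballR2.
    simpl in Hy. rewrite Rminus_0_r in Hy.
    destruct (Rle_or_lt y 0) as [Hy0|Hy0].
    + rewrite rpow_nonpos by lra. rewrite Rminus_0_r, Rabs_R0. apply cond_pos.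
    + rewrite rpow_pos by lra. rewrite Rminus_0_r. rewrite Rabs_pos_eq by (left; apply Rpower_pos).
      rewrite Rabs_pos_eq in Hy by lra.
      assert (y < 1) by (eapply Rlt_le_trans; [apply Hy| apply Rmin_l]).
      assert (y < e) by (eapply Rlt_le_trans; [apply Hy| apply Rmin_r]).
      assert (Rpower y r <= y) by (apply Rpower_le_self; lra). lra.
  - apply (ex_derive_continuous (K:=R_AbsRing) (V:=R_NormedModule)). eexists. now apply rpow_deriv.
Qed.

Lemma cont_exp (h : R -> R) x : continuous h x -> continuous (fun y => exp (h y)) x.
Proof.
  intros H. apply (continuous_comp h exp); auto.
  apply (ex_derive_continuous (K:=R_AbsRing) (V:=R_NormedModule)). eexists. apply is_derive_exp.
Qed.

Lemma cont_mult (f g : R -> R) x : continuous f x -> continuous g x -> continuous (fun y => f y * g y) x.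
Proof. intros; now apply (continuous_mult (K:=R_AbsRing) f g). Qed.

Lemma cont_opp (f : R -> R) x : continuous f x -> continuous (fun y => - f y) x.
Proof. intros; now apply (continuous_opp (V:=R_NormedModule) f). Qed.

Lemma cont_pow (m : nat) x : continuous (fun y => y ^ m) x.
Proof.
  apply (ex_derive_continuous (K:=R_AbsRing) (V:=R_NormedModule)). auto_derive. auto.
Qed.

Lemma FTC (g : R -> R) : (forall x, continuous g x) -> forall t, is_derive (fun T => RInt g 0 T) t (g t).
Proof.
  intros Hg t. apply (is_derive_RInt g (fun T => RInt g 0 T) 0 t); [|apply Hg].
  apply filter_forall. intros b. apply (RInt_correct (V:=R_CompleteNormedModule)). apply (ex_RInt_continuous (V:=R_CompleteNormedModule)). intros; apply Hg.
Qed.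

Lemma RInt0 (g : R -> R) : RInt g 0 0 = 0.
Proof. exact (RInt_point 0 g). Qed.

Definition gI (r K : R) (m : nat) (t : R) := t ^ m * exp (- (K * rpow t r)).

Lemma gI_cont r K m x : 1 <= r -> continuous (gI r K m) x.
Proof.
  intros Hr. unfold gI. apply cont_mult; [apply cont_pow|].
  apply cont_exp. apply cont_opp. apply cont_mult; [apply continuous_const|]. now apply rpow_cont.
Qed.

Lemma gI_ge0 r K m t : 0 <= t -> 0 <= gI r K m t.
Proof. intros H. unfold gI. apply Rmult_le_pos; [now apply pow_le| left; apply exp_pos]. Qed.

Lemma gI_pos r K m t : 0 < t -> 0 < gI r K m t.
Proof. intros H. unfold gI. apply Rmult_lt_0_compat; [now apply pow_lt| apply exp_pos]. Qed.

Lemma exp_bound y : 0 < y -> exp (- y) <= 4 / (y * y).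
Proof.
  intros Hy. rewrite exp_Ropp.
  assert (H1 : 1 + y / 2 < exp (y / 2)) by (apply exp_ineq1; lra).
  assert (H2 : exp y = exp (y/2) * exp (y/2)) by (rewrite <- exp_plus; f_equal; field).
  assert (H3 : y * y / 4 < exp y) by (rewrite H2; nra).
  assert (0 < exp y) by apply exp_pos.
  apply (Rmult_le_reg_l (exp y)); auto. rewrite Rinv_r by lra.
  apply (Rmult_le_reg_l (y * y)). nra. unfold Rdiv.
  replace (y * y * (exp y * (4 * / (y * y)))) with (4 * exp y) by (field; lra). lra.
Qed.

Definition Cb (K : R) := 4 + 16 / (K * K).

Lemma gI_bound r K m t : 2 <= r -> 0 < K -> (m <= 1)%nat -> 0 <= t ->
  gI r K m t * ((1 + t) * (1 + t)) <= Cb K.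
Proof.
  intros Hr HK Hm Ht. unfold gI, Cb.
  assert (HC : 0 <= 16 / (K * K)) by (unfold Rdiv; apply Rmult_le_pos; [lra| left; apply Rinv_0_lt_compat; nra]).
  assert (He0 : 0 < exp (- (K * rpow t r))) by apply exp_pos.
  destruct (Rle_or_lt t 1) as [Ht1|Ht1].
  - assert (exp (- (K * rpow t r)) <= 1).
    { rewrite <- exp_0. destruct (Req_dec (K * rpow t r) 0) as [E|E]. rewrite E, Ropp_0; lra.
      left. apply exp_increasing. assert (0 <= K * rpow t r) by (apply Rmult_le_pos; [lra|apply rpow_ge0]). lra. }
    assert (t ^ m <= 1).
    { destruct m as [|[|m]]; simpl; lra || (exfalso; lia). }
    assert (0 <= t ^ m) by (now apply pow_le).
    assert (t ^ m * exp (- (K * rpow t r)) <= 1).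
    { replace 1 with (1 * 1) by ring. apply Rmult_le_compat; lra. }
    assert ((1 + t) * (1 + t) <= 4) by nra.
    assert (0 <= t ^ m * exp (- (K * rpow t r))) by (apply Rmult_le_pos; lra).
    nra.
  - rewrite rpow_pos by lra.
    assert (Htr : t * t <= Rpower t r).
    { replace (t * t) with (Rpower t 2).
      apply Rle_Rpower; lra. replace 2 with (INR 2) by (simpl; ring). rewrite Rpower_pow by lra. simpl; ring. }
    set (y := K * Rpower t r).
    assert (Hy : K * (t * t) <= y) by (unfold y; apply Rmult_le_compat_l; lra).
    assert (Hy0 : 0 < K * (t * t)) by (apply Rmult_lt_0_compat; nra).
    assert (Hb := exp_bound y ltac:(lra)).
    assert (Hb2 : 4 / (y * y) <= 4 / ((K * (t * t)) * (K * (t*t)))).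
    { unfold Rdiv. apply Rmult_le_compat_l; [lra|]. apply Rinv_le_contravar; [nra|]. apply Rmult_le_compat; lra. }
    assert (Htm : t ^ m <= t) by (destruct m as [|[|m]]; simpl; lra || (exfalso; lia)).
    assert (0 <= t ^ m) by (apply pow_le; lra).
    assert (Hprod : t ^ m * exp (- y) <= t * (4 / ((K * (t * t)) * (K * (t*t))))).
    { assert (0 < exp (- y)) by apply exp_pos. apply Rmult_le_compat; lra. }
    assert (Hsq : (1 + t) * (1 + t) <= 4 * (t * t)) by nra.
    assert (0 <= t ^ m * exp (- y)) by (apply Rmult_le_pos; [lra| left; apply exp_pos]).
    assert (Hfin : t * (4 / ((K * (t * t)) * (K * (t*t)))) * (4 * (t * t)) = 16 / (K * K) / t) by (field; lra).
    assert (Hfin2 : 16 / (K * K) / t <= 16 / (K * K)).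
    { replace (16/(K*K)/t) with (16/(K*K) * /t) by (unfold Rdiv; ring).
      assert (/ t <= 1) by (rewrite <- Rinv_1; apply Rinv_le_contravar; lra).
      assert (0 <= 16/(K*K) * (1 - / t)) by (apply Rmult_le_pos; lra). nra. }
    assert (t ^ m * exp (- y) * ((1 + t) * (1 + t)) <= t * (4 / ((K * (t * t)) * (K * (t*t)))) * (4 * (t * t))).
    { apply Rmult_le_compat; lra. }
    lra.
Qed.

Lemma F_der r K m t : 1 <= r -> is_derive (fun T => RInt (gI r K m) 0 T) t (gI r K m t).
Proof. intros Hr. apply FTC. intros; now apply gI_cont. Qed.

Lemma F_mono r K m : 1 <= r -> forall a b, 0 <= a -> a <= b ->
  RInt (gI r K m) 0 a <= RInt (gI r K m) 0 b.
Proof.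
  intros Hr. apply (mono_gen _ (gI r K m) 0).
  - intros; now apply F_der.
  - intros; apply gI_ge0; lra.
  - apply (deriv_right _ 0 (gI r K m 0)). now apply F_der.
Qed.

Lemma F_bound r K m T : 2 <= r -> 0 < K -> (m <= 1)%nat -> 0 <= T ->
  RInt (gI r K m) 0 T <= Cb K.
Proof.
  intros Hr HK Hm HT.
  set (G := fun T => Cb K * (1 - / (1 + T)) - RInt (gI r K m) 0 T).
  assert (HG : forall t, 0 < t -> is_derive G t (Cb K / ((1 + t) * (1 + t)) - gI r K m t)).
  { intros t Ht. unfold G. apply (is_derive_minus (fun T => Cb K * (1 - / (1 + T)))).
    - apply (deriv_eq _ _ (Cb K * - (- (1) * / ((1 + t) * (1 + t))))); [auto_derive; [lra|reflexivity] | field; lra].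
    - apply F_der; lra. }
  assert (HG0 : forall t, is_derive G t (Cb K / ((1 + t) * (1 + t)) - gI r K m t) \/ t <= -1).
  { intros t. destruct (Rle_or_lt t (-1)); [now right|left].
    unfold G. apply (is_derive_minus (fun T => Cb K * (1 - / (1 + T)))).
    - eapply deriv_eq; [auto_derive; [lra|reflexivity] | field; lra].
    - apply F_der; lra. }
  assert (Hm0 : G 0 <= G T).
  { apply (mono_gen G (fun t => Cb K / ((1 + t) * (1 + t)) - gI r K m t) 0); auto; try lra.
    - intros t Ht. assert (H := gI_bound r K m t Hr HK Hm ltac:(lra)).
      assert (0 < (1 + t) * (1 + t)) by nra.
      assert (gI r K m t <= Cb K / ((1+t)*(1+t))).
      { apply (Rmult_le_reg_r ((1 + t) * (1 + t))); auto.
        unfold Rdiv. rewrite Rmult_assoc, Rinv_l by lra. lra. }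
      lra.
    - destruct (HG0 0) as [H|H]; [|lra]. now apply (deriv_right G 0 _ H). }
  unfold G in Hm0. rewrite RInt0 in Hm0. rewrite Rplus_0_r, Rinv_1 in Hm0.
  assert (0 < / (1 + T)) by (apply Rinv_0_lt_compat; lra).
  assert (0 <= Cb K) by (unfold Cb; assert (0 < K * K) by nra; assert (0 < 16 / (K*K)) by (unfold Rdiv; apply Rmult_lt_0_compat; [lra|now apply Rinv_0_lt_compat]); lra).
  assert (0 <= Cb K * / (1 + T)) by (apply Rmult_le_pos; lra).
  nra.
Qed.

Lemma F_lim r K m : 2 <= r -> 0 < K -> (m <= 1)%nat ->
  exists I : R, 0 < I /\ is_lim (fun T => RInt (gI r K m) 0 T) p_infty I /\
    forall T, 0 <= T -> RInt (gI r K m) 0 T <= I.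
Proof.
  intros Hr HK Hm.
  destruct (lim_of_mono (fun T => RInt (gI r K m) 0 T) (Cb K)) as [I [HI HIb]].
  - apply F_mono; lra.
  - intros; now apply F_bound.
  - exists I. split; [|split; auto].
    destruct (MVT_gen (fun T => RInt (gI r K m) 0 T) (1/2) 1 (gI r K m)) as [c [Hc Heq]].
    + intros; apply F_der; lra.
    + intros x _. apply (deriv_cont _ x (gI r K m x)). apply F_der; lra.
    + unfold Rmin, Rmax in Hc; destruct (Rle_dec (1/2) 1); [|lra].
      assert (0 < gI r K m c) by (apply gI_pos; lra).
      assert (RInt (gI r K m) 0 0 <= RInt (gI r K m) 0 (1/2)) by (apply F_mono; lra).
      rewrite RInt0 in H0. assert (RInt (gI r K m) 0 1 <= I) by (apply HIb; lra). nra.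
Qed.

Lemma psi_phi r K u : 0 < r -> 0 < K -> 0 < u -> K * Rpower (Rpower (u / K) (1 / r)) r = u.
Proof.
  intros Hr HK Hu. rewrite Rpower_mult. replace (1 / r * r) with 1 by (field; lra).
  rewrite Rpower_1. field; lra. unfold Rdiv; apply Rmult_lt_0_compat; [lra|now apply Rinv_0_lt_compat].
Qed.

Lemma phi_psi r K t : 0 < r -> 0 < K -> 0 < t -> Rpower (K * Rpower t r / K) (1 / r) = t.
Proof.
  intros Hr HK Ht. replace (K * Rpower t r / K) with (Rpower t r) by (field; lra).
  rewrite Rpower_mult. replace (r * (1 / r)) with 1 by (field; lra). now rewrite Rpower_1.
Qed.

Lemma phi_pos K r u : 0 < Rpower (u / K) (1 / r).
Proof. apply Rpower_pos. Qed.

Lemma gamma_cont s v : 0 < v -> continuous (fun t => Rpower t (s - 1) * exp (- t)) v.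
Proof.
  intros Hv. apply cont_mult.
  - apply (ex_derive_continuous (K:=R_AbsRing) (V:=R_NormedModule)). eexists. now apply Rpower_deriv.
  - apply cont_exp. apply cont_opp. apply continuous_id.
Qed.

Lemma integrand_eq r K m s y : 0 < r -> 0 < K -> s * r = INR m + 1 -> 0 < y ->
  K * (r * Rpower y (r - 1)) * (Rpower (K * Rpower y r) (s - 1) * exp (- (K * Rpower y r)))
  = r * Rpower K s * gI r K m y.
Proof.
  intros Hr HK Hs Hy. unfold gI. rewrite rpow_pos by lra.
  rewrite <- Rpower_mult_distr by (try apply Rpower_pos; lra).
  rewrite Rpower_mult.
  rewrite <- (Rpower_pow m y) by lra.
  replace (INR m) with ((r - 1) + r * (s - 1)) by lra.
  rewrite Rpower_plus.
  replace (Rpower K s) with (K * Rpower K (s - 1)).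
  ring.
  replace s with (1 + (s - 1)) at 2 by ring. rewrite Rpower_plus, Rpower_1 by lra. reflexivity.
Qed.

Lemma sub_integral r K m s e M : 2 <= r -> 0 < K -> s * r = INR m + 1 -> 0 < e -> 0 < M ->
  RInt (fun t => Rpower t (s - 1) * exp (- t)) e M =
  r * Rpower K s * (RInt (gI r K m) 0 (Rpower (M / K) (1 / r)) - RInt (gI r K m) 0 (Rpower (e / K) (1 / r))).
Proof.
  intros Hr HK Hs He HM.
  set (a := Rpower (e / K) (1 / r)). set (b := Rpower (M / K) (1 / r)).
  assert (Ha : 0 < a) by apply Rpower_pos. assert (Hb : 0 < b) by apply Rpower_pos.
  set (gam := fun t => Rpower t (s - 1) * exp (- t)).
  set (kap := r * Rpower K s).
  assert (Hint : forall x, Rmin a b <= x <= Rmax a b -> 0 < x).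
  { intros x Hx. unfold Rmin in Hx; destruct (Rle_dec a b); lra. }
  assert (H1 : is_RInt (fun y => kap * gI r K m y) a b (RInt gam e M)).
  { replace (RInt gam e M) with (RInt gam (K * Rpower a r) (K * Rpower b r))
      by (unfold a, b; rewrite !psi_phi; auto; lra).
    apply (is_RInt_ext (fun y => scal (K * (r * Rpower y (r - 1))) (gam (K * Rpower y r)))).
    - intros x Hx. assert (0 < x) by (apply Hint; lra).
      unfold gam, kap. unfold scal; simpl; unfold mult; simpl. apply integrand_eq; auto; lra.
    - apply (is_RInt_comp (V:=R_CompleteNormedModule) gam (fun y => K * Rpower y r) (fun y => K * (r * Rpower y (r - 1)))).
      + intros x Hx. assert (0 < x) by auto. apply gamma_cont.
        apply Rmult_lt_0_compat; [lra|apply Rpower_pos].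
      + intros x Hx. assert (0 < x) by auto. split.
        * apply (is_derive_scal (fun y => Rpower y r)). now apply Rpower_deriv.
        * apply cont_mult; [apply continuous_const|]. apply cont_mult; [apply continuous_const|].
          apply (ex_derive_continuous (K:=R_AbsRing) (V:=R_NormedModule)). eexists. now apply Rpower_deriv. }
  assert (Hex : forall u v, ex_RInt (gI r K m) u v).
  { intros u v. apply (ex_RInt_continuous (V:=R_CompleteNormedModule)). intros; apply gI_cont; lra. }
  assert (H2 : is_RInt (fun y => kap * gI r K m y) a b (kap * RInt (gI r K m) a b)).
  { apply (is_RInt_scal (V:=R_NormedModule) (gI r K m) a b kap). apply (RInt_correct (V:=R_CompleteNormedModule)). apply Hex. }
  assert (E := eq_trans (eq_sym (is_RInt_unique _ _ _ _ H1)) (is_RInt_unique _ _ _ _ H2)).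
  rewrite E. f_equal.
  assert (C := RInt_Chasles (V:=R_CompleteNormedModule) (gI r K m) 0 a b (Hex _ _) (Hex _ _)).
  unfold plus in C; simpl in C. lra.
Qed.

Lemma gamma_eq r K m s (I : R) : 2 <= r -> 0 < K -> s * r = INR m + 1 ->
  is_lim (fun T => RInt (gI r K m) 0 T) p_infty I ->
  Gamma s = r * Rpower K s * I.
Proof.
  intros Hr HK Hs HI. unfold Gamma.
  set (gam := fun t => Rpower t (s - 1) * exp (- t)).
  set (F := fun T => RInt (gI r K m) 0 T).
  assert (Hkap : 0 < r * Rpower K s) by (apply Rmult_lt_0_compat; [lra|apply Rpower_pos]).
  apply (is_RInt_gen_unique (V:=R_CompleteNormedModule)).
  apply (filterlimi_lim_ext_loc (fun ab => RInt gam (fst ab) (snd ab))).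
  - apply (Filter_prod _ _ _ (fun e => 0 < e) (fun M => 0 < M)).
    + exists (mkposreal 1 Rlt_0_1). intros; auto.
    + exists 0. intros; auto.
    + intros e M He HM. simpl. apply (RInt_correct (V:=R_CompleteNormedModule)).
      apply (ex_RInt_continuous (V:=R_CompleteNormedModule)). intros z Hz. apply gamma_cont.
      unfold Rmin in Hz; destruct (Rle_dec e M); lra.
  - apply filterlim_locally. intros eps.
    assert (Heta : 0 < eps / (2 * (r * Rpower K s))).
    { unfold Rdiv. apply Rmult_lt_0_compat; [apply cond_pos|]. apply Rinv_0_lt_compat; lra. }
    set (eta := mkposreal _ Heta).
    destruct (proj1 (filterlim_locally _ _) HI eta) as [T0 HT0].
    assert (HF0 : continuous F 0).
    { apply (ex_derive_continuous (K:=R_AbsRing) (V:=R_NormedModule)). eexists. apply F_der. lra. }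
    destruct (proj1 (filterlim_locally _ _) HF0 eta) as [d Hd].
    assert (Hd0 : 0 < K * Rpower d r) by (apply Rmult_lt_0_compat; [lra|apply Rpower_pos]).
    set (T1 := Rmax T0 0 + 1).
    assert (HT1 : 0 < T1) by (unfold T1; generalize (Rmax_r T0 0); lra).
    assert (HT1' : T0 < T1) by (unfold T1; generalize (Rmax_l T0 0); lra).
    apply (Filter_prod _ _ _ (fun e => 0 < e < K * Rpower d r) (fun M => K * Rpower T1 r < M)).
    + exists (mkposreal _ Hd0). intros y Hy Hy0. apply ballR1 in Hy. simpl in Hy.
      rewrite Rminus_0_r, Rabs_pos_eq in Hy by lra. split; lra.
    + exists (K * Rpower T1 r). auto.
    + intros e M [He1 He2] HM. simpl.
      assert (HM0 : 0 < M). { assert (0 < K * Rpower T1 r) by (apply Rmult_lt_0_compat; [lra|apply Rpower_pos]). lra. }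
      unfold gam. rewrite (sub_integral r K m s e M) by lra.
      set (a := Rpower (e / K) (1 / r)). set (b := Rpower (M / K) (1 / r)).
      assert (Ha : a < d).
      { unfold a. rewrite <- (phi_psi r K d) by (lra || apply cond_pos).
        apply Rpower_lt_base. unfold Rdiv; apply Rmult_lt_0_compat; [lra|now apply Rinv_0_lt_compat].
        unfold Rdiv; apply Rmult_lt_compat_r; [now apply Rinv_0_lt_compat|lra].
        unfold Rdiv; apply Rmult_lt_0_compat; [lra|apply Rinv_0_lt_compat; lra]. }
      assert (Hb : T1 < b).
      { unfold b. rewrite <- (phi_psi r K T1) by lra.
        apply Rpower_lt_base. unfold Rdiv; apply Rmult_lt_0_compat; [|now apply Rinv_0_lt_compat].
        apply Rmult_lt_0_compat; [lra|apply Rpower_pos].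
        unfold Rdiv; apply Rmult_lt_compat_r; [now apply Rinv_0_lt_compat|lra].
        unfold Rdiv; apply Rmult_lt_0_compat; [lra|apply Rinv_0_lt_compat; lra]. }
      assert (Ha0 : 0 < a) by apply Rpower_pos.
      assert (H1 : Rabs (F b - I) < eta) by (apply ballR1; apply HT0; lra).
      assert (H2 : Rabs (F a - F 0) < eta).
      { apply ballR1. apply Hd. apply ballR2. rewrite Rminus_0_r, Rabs_pos_eq; lra. }
      unfold F in H2. rewrite RInt0, Rminus_0_r in H2. fold F in H2.
      apply ballR2. simpl in H1, H2. fold F.
      apply Rabs_lt_between in H1. apply Rabs_lt_between in H2.
      assert (E : r * Rpower K s * (eps / (2 * (r * Rpower K s))) = eps / 2) by (assert (0 < Rpower K s) by apply Rpower_pos; field; repeat split; lra).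
      unfold F in *. set (u := RInt (gI r K m) 0 b) in *. set (w := RInt (gI r K m) 0 a) in *.
      replace (r * Rpower K s * (u - w) - r * Rpower K s * I) with
        (r * Rpower K s * ((u - I) - w)) by ring.
      rewrite Rabs_mult, (Rabs_pos_eq (r * Rpower K s)) by lra.
      assert (Rabs ((u - I) - w) < 2 * (eps / (2 * (r * Rpower K s)))) by (apply Rabs_def1; lra).
      apply Rlt_le_trans with (r * Rpower K s * (2 * (eps / (2 * (r * Rpower K s))))).
      apply Rmult_lt_compat_l; lra. lra.
Qed.

Definition rc (f : R -> R) a := filterlim f (at_right a) (locally (f a)).

Lemma rc_cont f a : continuous f a -> rc f a.
Proof. apply cont_right. Qed.

Lemma rc_der f a l : is_derive f a l -> rc f a.
Proof. apply deriv_right. Qed.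

Lemma rc_mult f g a : rc f a -> rc g a -> rc (fun t => f t * g t) a.
Proof.
  intros Hf Hg. unfold rc.
  apply (filterlim_comp_2 f g Rmult Hf Hg (filterlim_mult (K:=R_AbsRing) (f a) (g a))).
Qed.

Lemma rc_plus f g a : rc f a -> rc g a -> rc (fun t => f t + g t) a.
Proof.
  intros Hf Hg. unfold rc.
  apply (filterlim_comp_2 f g Rplus Hf Hg (filterlim_plus (V:=R_NormedModule) (f a) (g a))).
Qed.

Lemma rc_const k a : rc (fun _ => k) a.
Proof. apply rc_cont, continuous_const. Qed.

Lemma rc_minus f g a : rc f a -> rc g a -> rc (fun t => f t - g t) a.
Proof.
  intros Hf Hg. assert (H := rc_plus f (fun t => -1 * g t) a Hf (rc_mult _ _ a (rc_const (-1) a) Hg)).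
  unfold rc in *. replace (f a - g a) with (f a + -1 * g a) by ring.
  eapply filterlim_ext; [|exact H]. intros; simpl; ring.
Qed.

Lemma lim_scal f k (lf : R) : is_lim f p_infty lf -> is_lim (fun y => k * f y) p_infty (k * lf).
Proof. intros H. apply (is_lim_scal_l f k p_infty lf H). Qed.

Lemma lim_lin f g k (lf lg : R) : is_lim f p_infty lf -> is_lim g p_infty lg ->
  is_lim (fun y => f y - k * g y) p_infty (lf - k * lg).
Proof.
  intros Hf Hg. apply (is_lim_minus f (fun y => k * g y) p_infty lf (k * lg)); auto.
  now apply lim_scal. reflexivity.
Qed.

Lemma ext_cont (f : R -> R) : (forall t, 0 < t -> continuous f t) -> rc f 0 ->
  forall t, continuous (fun y => f (Rmax y 0)) t.
Proof.
  intros Hc H0 t. destruct (Rtotal_order t 0) as [Ht|[Ht|Ht]].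
  - apply (continuous_ext_loc _ (fun _ => f 0)).
    + apply (filter_imp (fun y => y < 0)); [|now apply locally_neg].
      intros y Hy. rewrite Rmax_right; lra.
    + apply continuous_const.
  - subst t. intros P HP. rewrite Rmax_right in HP by lra.
    destruct (H0 P HP) as [d Hd]. exists d. intros y Hy.
    destruct (Rle_or_lt y 0) as [Hy0|Hy0].
    + rewrite Rmax_right by lra. destruct HP as [e He]. apply He. apply ballR2.
      rewrite Rminus_diag, Rabs_R0. apply cond_pos.
    + rewrite Rmax_left by lra. now apply Hd.
  - apply (continuous_ext_loc _ f).
    + apply (filter_imp (fun y => 0 < y)); [|now apply locally_pos].
      intros y Hy. rewrite Rmax_left; lra.
    + now apply Hc.
Qed.

Lemma der_cont (f : R -> R) t l : is_derive f t l -> continuous f t.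
Proof. intros H. apply (ex_derive_continuous (K:=R_AbsRing) (V:=R_NormedModule)). exists l; exact H. Qed.

Lemma stepA p c a x x1 x2 : 1 <= p -> 0 < c -> 0 < a -> is_solution p c a x x1 x2 ->
  forall t, 0 <= t -> 0 < x2 t /\ x2 t <= a.
Proof.
  intros hp hc ha [Hx [Hx1 [Hx2 [Cx [Cx1 [Cx2 [E0 [E1 E2]]]]]]]].
  set (rr := fun t => rpow (x (Rmax t 0)) p).
  assert (Hrr : forall t, continuous rr t).
  { intros t. unfold rr. apply (continuous_comp (fun y => x (Rmax y 0)) (fun y => rpow y p)).
    - apply ext_cont; [|exact Cx]. intros; eapply der_cont; now apply Hx.
    - now apply rpow_cont. }
  set (RR := fun T => RInt rr 0 T).
  assert (HR : forall t, is_derive RR t (rr t)) by (apply FTC; exact Hrr).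
  assert (HR0 : RR 0 = 0) by apply RInt0.
  assert (HRm : forall t, 0 <= t -> 0 <= RR t).
  { intros t Ht. rewrite <- HR0. apply (mono_gen RR rr 0); auto; try lra.
    intros; apply rpow_ge0. apply (rc_der RR 0 (rr 0)); auto. }
  set (z := fun t => x2 t * exp (c * RR t)).
  assert (Hz : forall t, 0 < t -> is_derive z t 0).
  { intros t Ht. unfold z. eapply deriv_eq.
    apply (is_derive_mult x2 (fun t => exp (c * RR t))). apply Hx2; auto.
    apply (is_derive_comp exp (fun t => c * RR t)). apply is_derive_exp.
    apply (is_derive_scal RR). apply HR. intros; apply Rmult_comm.
    unfold rr. rewrite Rmax_left by lra. unfold plus, mult, scal; simpl; unfold mult; simpl. ring. }
  assert (Hzc : rc z 0).
  { apply rc_mult; [exact Cx2|]. apply rc_cont. apply cont_exp.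
    apply cont_mult; [apply continuous_const|]. eapply der_cont; apply HR. }
  assert (Hz0 : z 0 = a) by (unfold z; rewrite HR0, E2, Rmult_0_r, exp_0; ring).
  intros t Ht.
  assert (H1 : z 0 <= z t) by (apply (mono_gen z (fun _ => 0) 0); [exact Hz|intros; lra|exact Hzc|lra|lra]).
  assert (H2 : (fun t => 0 - z t) 0 <= (fun t => 0 - z t) t).
  { apply (mono_gen (fun t => 0 - z t) (fun _ => 0) 0); try lra.
    intros s Hs. eapply deriv_eq. apply (is_derive_minus (fun _ => 0) z). apply is_derive_const. now apply Hz. simpl. unfold minus, plus, opp, zero; simpl. ring.
    intros; lra.
    apply (rc_minus (fun _ => 0) z 0 (rc_const 0 0) Hzc). }
  simpl in H2. assert (Hzt : z t = a) by lra.
  unfold z in Hzt.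
  assert (He : 0 < exp (c * RR t)) by apply exp_pos.
  assert (He1 : 1 <= exp (c * RR t)).
  { rewrite <- exp_0. destruct (Req_dec (c * RR t) 0) as [E|E]. rewrite E; lra.
    left; apply exp_increasing. assert (0 <= c * RR t) by (apply Rmult_le_pos; [lra|auto]). lra. }
  split.
  - destruct (Rle_or_lt (x2 t) 0) as [H|H]; auto.
    assert (x2 t * exp (c * RR t) <= 0). { apply Rmult_le_0_r; lra. } lra.
  - destruct (Rle_or_lt (x2 t) a) as [H|H]; auto.
    assert (a * 1 < x2 t * exp (c * RR t)) by nra. lra.
Qed.

Lemma der_const k t : is_derive (fun _ => k) t 0.
Proof. eapply deriv_eq; [apply is_derive_const|reflexivity]. Qed.

Lemma der_lin k t : is_derive (fun y => k * y) t k.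
Proof. apply (deriv_eq _ _ (k * 1)); [auto_derive; auto|ring]. Qed.

Lemma der_sq k t : is_derive (fun y => k * y * y / 2) t (k * t).
Proof. eapply deriv_eq; [auto_derive; auto| field]. Qed.

Lemma der_minus (f g : R -> R) t df dg : is_derive f t df -> is_derive g t dg ->
  is_derive (fun y => f y - g y) t (df - dg).
Proof. intros Hf Hg. apply (is_derive_minus f g t df dg Hf Hg). Qed.

Lemma der_mult (f g : R -> R) t df dg : is_derive f t df -> is_derive g t dg ->
  is_derive (fun y => f y * g y) t (df * g t + f t * dg).
Proof. intros Hf Hg. apply (is_derive_mult f g t df dg Hf Hg). intros; apply Rmult_comm. Qed.

Lemma der_exp (f : R -> R) t df : is_derive f t df -> is_derive (fun y => exp (f y)) t (df * exp (f t)).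
Proof. intros H. apply (is_derive_comp exp f t (exp (f t)) df). apply is_derive_exp. exact H. Qed.

Lemma stepB p c a x x1 x2 : 1 <= p -> 0 < c -> 0 < a -> is_solution p c a x x1 x2 ->
  forall t, 0 <= t -> x1 t <= a * t /\ 0 <= x1 t /\ 0 <= x t /\ x t <= a * t * t / 2.
Proof.
  intros hp hc ha Hs. pose proof (stepA p c a x x1 x2 hp hc ha Hs) as HA.
  destruct Hs as [Hx [Hx1 [Hx2 [Cx [Cx1 [Cx2 [E0 [E1 E2]]]]]]]].
  assert (Hv : forall t, 0 <= t -> 0 <= a * t - x1 t).
  { intros t Ht. replace 0 with (a * 0 - x1 0) by (rewrite E1; ring).
    apply (mono_gen (fun t => a * t - x1 t) (fun t => a - x2 t) 0); auto; try lra.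
    - intros s Hs. apply der_minus. apply der_lin. now apply Hx1.
    - intros s Hs. destruct (HA s); lra.
    - apply (rc_minus (fun t => a * t) x1 0); auto. apply rc_der with a; apply der_lin. }
  assert (Hx1p : forall t, 0 <= t -> 0 <= x1 t).
  { intros t Ht. rewrite <- E1. apply (mono_gen x1 x2 0); auto; try lra.
    intros s Hs. destruct (HA s); lra. }
  assert (Hxp : forall t, 0 <= t -> 0 <= x t).
  { intros t Ht. rewrite <- E0. apply (mono_gen x x1 0); auto; try lra.
    intros s Hs. apply Hx1p; lra. }
  assert (Hu : forall t, 0 <= t -> 0 <= a * t * t / 2 - x t).
  { intros t Ht. replace 0 with (a * 0 * 0 / 2 - x 0) by (rewrite E0; field).
    apply (mono_gen (fun t => a * t * t / 2 - x t) (fun t => a * t - x1 t) 0); auto; try lra.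
    - intros s Hs. apply der_minus. apply der_sq. now apply Hx.
    - intros s Hs. apply Hv; lra.
    - apply (rc_minus (fun t => a * t * t / 2) x 0); auto. apply rc_der with (a * 0); apply der_sq. }
  intros t Ht. specialize (Hv t Ht). specialize (Hu t Ht). repeat split; auto; lra.
Qed.

Definition Kc p c a := c * Rpower a p / (Rpower 2 p * (2 * p + 1)).

Lemma Rpower_inv2 p : Rpower (/ 2) p = / Rpower 2 p.
Proof. unfold Rpower. rewrite ln_Rinv by lra. rewrite <- exp_Ropp. f_equal. ring. Qed.

Lemma Kc_alg p c a t : 0 < p -> 0 < a -> 0 < t ->
  Kc p c a * ((2 * p + 1) * Rpower t (2 * p + 1 - 1)) = c * Rpower (a * t * t / 2) p.
Proof.
  intros Hp Ha Ht. unfold Kc.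
  replace (a * t * t / 2) with (a * ((t * t) * / 2)) by field.
  assert (0 < t * t) by nra. assert (0 < / 2) by lra. assert (0 < t * t * / 2) by nra.
  rewrite <- (Rpower_mult_distr a) by lra. rewrite <- (Rpower_mult_distr (t * t)) by lra.
  rewrite <- (Rpower_mult_distr t t) by lra.
  rewrite Rpower_inv2.
  replace (2 * p + 1 - 1) with (p + p) by ring. rewrite Rpower_plus.
  assert (0 < Rpower 2 p) by apply Rpower_pos.
  field. lra.
Qed.

Lemma rpow_der_scal k r t : 0 < t -> is_derive (fun y => k * rpow y r) t (k * (r * Rpower t (r - 1))).
Proof. intros Ht. apply (is_derive_scal (fun y => rpow y r)). now apply rpow_deriv. Qed.

Lemma stepC p c a x x1 x2 : 1 <= p -> 0 < c -> 0 < a -> is_solution p c a x x1 x2 ->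
  forall t, 0 <= t -> a * exp (- (Kc p c a * rpow t (2 * p + 1))) <= x2 t.
Proof.
  intros hp hc ha Hs. pose proof (stepA p c a x x1 x2 hp hc ha Hs) as HA.
  pose proof (stepB p c a x x1 x2 hp hc ha Hs) as HB.
  destruct Hs as [Hx [Hx1 [Hx2 [Cx [Cx1 [Cx2 [E0 [E1 E2]]]]]]]].
  set (q := 2 * p + 1). set (K := Kc p c a).
  set (w := fun t => x2 t * exp (K * rpow t q)).
  assert (Hw : forall t, 0 <= t -> w 0 <= w t).
  { intros t Ht.
    apply (mono_gen w (fun t => - (c * rpow (x t) p * x2 t) * exp (K * rpow t q) +
        x2 t * (K * (q * Rpower t (q - 1)) * exp (K * rpow t q))) 0); auto; try lra.
    - intros s Hs. unfold w. apply (der_mult x2 (fun y => exp (K * rpow y q))). now apply Hx2. apply (der_exp (fun y => K * rpow y q)). now apply rpow_der_scal.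
    - intros s Hs. unfold K, q. rewrite Kc_alg by lra.
      destruct (HA s) as [H1 H2]; [lra|]. destruct (HB s) as [_ [_ [_ H3]]]; [lra|].
      assert (rpow (x s) p <= rpow (a * s * s / 2) p) by (apply rpow_le; lra).
      rewrite (rpow_pos (a * s * s / 2)) in H by (assert (0 < a * s) by nra; assert (0 < a * s * s) by nra; lra).
      assert (0 < exp (K * rpow s q)) by apply exp_pos.
      assert (0 <= c * (Rpower (a * s * s / 2) p - rpow (x s) p)) by (apply Rmult_le_pos; lra).
      assert (0 <= x2 s * exp (K * rpow s q) * (c * (Rpower (a * s * s / 2) p - rpow (x s) p))).
      { apply Rmult_le_pos; [apply Rmult_le_pos|]; lra. }
      unfold K, q in *.
      replace (- (c * rpow (x s) p * x2 s) * exp (Kc p c a * rpow s (2 * p + 1)) +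
        x2 s * (c * Rpower (a * s * s / 2) p * exp (Kc p c a * rpow s (2 * p + 1))))
      with (x2 s * exp (Kc p c a * rpow s (2 * p + 1)) * (c * (Rpower (a * s * s / 2) p - rpow (x s) p))) by ring.
      lra.
    - apply rc_mult; [exact Cx2|]. apply rc_cont. apply cont_exp.
      apply cont_mult; [apply continuous_const|]. apply rpow_cont. unfold q; lra. }
  intros t Ht. specialize (Hw t Ht). unfold w in Hw.
  rewrite E2, (rpow_nonpos 0) in Hw by lra. rewrite Rmult_0_r, exp_0, Rmult_1_r in Hw.
  assert (0 < exp (- (K * rpow t q))) by apply exp_pos.
  apply Rle_trans with (x2 t * exp (K * rpow t q) * exp (- (K * rpow t q))).
  apply Rmult_le_compat_r; lra.
  rewrite Rmult_assoc, <- exp_plus, Rplus_opp_r, exp_0. lra.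
Qed.

Lemma stepD p c a x x1 x2 (I0 I1 : R) : 1 <= p -> 0 < c -> 0 < a -> is_solution p c a x x1 x2 ->
  is_lim (fun T => RInt (gI (2 * p + 1) (Kc p c a) 0) 0 T) p_infty I0 ->
  is_lim (fun T => RInt (gI (2 * p + 1) (Kc p c a) 1) 0 T) p_infty I1 ->
  (forall t, 0 <= t -> a * RInt (gI (2 * p + 1) (Kc p c a) 0) 0 t <= x1 t) /\
  (forall t, 0 <= t -> a * (I0 * t - I1) <= x t).
Proof.
  intros hp hc ha Hs HI0 HI1. pose proof (stepC p c a x x1 x2 hp hc ha Hs) as HC.
  destruct Hs as [Hx [Hx1 [Hx2 [Cx [Cx1 [Cx2 [E0 [E1 E2]]]]]]]].
  set (q := 2 * p + 1). set (K := Kc p c a).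
  assert (Hq : 1 <= q) by (unfold q; lra).
  set (P0 := fun T => RInt (gI q K 0) 0 T). set (P1 := fun T => RInt (gI q K 1) 0 T).
  assert (D0 : forall t, is_derive P0 t (gI q K 0 t)) by (intros; now apply F_der).
  assert (D1 : forall t, is_derive P1 t (gI q K 1 t)) by (intros; now apply F_der).
  assert (Hg1 : forall t, gI q K 1 t = t * gI q K 0 t) by (intros; unfold gI; simpl; ring).
  assert (P00 : P0 0 = 0) by apply RInt0. assert (P10 : P1 0 = 0) by apply RInt0.
  assert (HD1 : forall t, 0 <= t -> a * P0 t <= x1 t).
  { intros t Ht. cut (0 - a * P0 0 <= x1 t - a * P0 t). rewrite P00; lra.
    replace (0 - a * P0 0) with (x1 0 - a * P0 0) by (rewrite E1; ring).
    apply (mono_gen (fun t => x1 t - a * P0 t) (fun t => x2 t - a * gI q K 0 t) 0); auto; try lra.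
    - intros s Hs. apply der_minus. now apply Hx1. apply (is_derive_scal P0). apply D0.
    - intros s Hs. specialize (HC s ltac:(lra)). unfold gI; simpl. fold q K in HC. lra.
    - apply (rc_minus x1 (fun t => a * P0 t) 0 Cx1). apply rc_der with (a * gI q K 0 0).
      apply (is_derive_scal P0). apply D0. }
  assert (HD2 : forall t, 0 <= t -> a * (t * P0 t - P1 t) <= x t).
  { intros t Ht. cut (0 - a * (0 * P0 0 - P1 0) <= x t - a * (t * P0 t - P1 t)). rewrite P10; lra.
    replace (0 - a * (0 * P0 0 - P1 0)) with (x 0 - a * (0 * P0 0 - P1 0)) by (rewrite E0; ring).
    assert (Hd : forall s, is_derive (fun t => a * (t * P0 t - P1 t)) s (a * P0 s)).
    { intros s. apply (deriv_eq _ _ (a * ((1 * P0 s + s * gI q K 0 s) - gI q K 1 s))).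
      apply (is_derive_scal (fun t => t * P0 t - P1 t)). apply der_minus; [|apply D1].
      apply (der_mult (fun t => t) P0); [apply (is_derive_id (K:=R_AbsRing))|apply D0].
      rewrite Hg1. ring. }
    apply (mono_gen (fun t => x t - a * (t * P0 t - P1 t)) (fun t => x1 t - a * P0 t) 0); auto; try lra.
    - intros s Hs. apply der_minus. now apply Hx. apply Hd.
    - intros s Hs. specialize (HD1 s ltac:(lra)). lra.
    - apply (rc_minus x (fun t => a * (t * P0 t - P1 t)) 0 Cx). apply rc_der with (a * P0 0). apply Hd. }
  assert (HD3 : forall t, 0 <= t -> P1 t - t * P0 t <= I1 - t * I0).
  { intros t Ht.
    apply (lim_le (fun _ => P1 t - t * P0 t) (fun U => P1 U - t * P0 U) _ _ t).
    - apply is_lim_const.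
    - now apply lim_lin.
    - intros U HU.
      apply (mono_gen (fun U => P1 U - t * P0 U) (fun U => gI q K 1 U - t * gI q K 0 U) t); auto; try lra.
      + intros s Hs. apply (der_minus P1 (fun U => t * P0 U)). apply D1. apply (is_derive_scal P0). apply D0.
      + intros s Hs. rewrite Hg1. assert (0 <= gI q K 0 s) by (apply gI_ge0; lra). nra.
      + apply (rc_der (fun U => P1 U - t * P0 U) t (gI q K 1 t - t * gI q K 0 t)). apply (der_minus P1 (fun U => t * P0 U)). apply D1. apply (is_derive_scal P0). apply D0. }
  split; auto.
  intros t Ht. specialize (HD2 t Ht). specialize (HD3 t Ht).
  assert (a * (I0 * t - I1) <= a * (t * P0 t - P1 t)) by (apply Rmult_le_compat_l; lra).
  lra.
Qed.

Lemma der_shift (f : R -> R) T t l : is_derive f (t - T) l -> is_derive (fun y => f (y - T)) t l.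
Proof.
  intros H. apply (deriv_eq _ _ (1 * l)); [|ring].
  apply (is_derive_comp f (fun y => y - T) t l 1). exact H.
  eapply deriv_eq; [auto_derive; auto | ring].
Qed.

Lemma cont_shift (f : R -> R) T t : continuous f (t - T) -> continuous (fun y => f (y - T)) t.
Proof.
  intros H. apply (continuous_comp (fun y => y - T) f); auto.
  apply (der_cont _ _ 1). eapply deriv_eq; [auto_derive; auto | ring].
Qed.

Definition Lc p c S := c * Rpower S p / (p + 1).

Lemma stepE p c a x x1 x2 (I0 I1 J : R) : 1 <= p -> 0 < c -> 0 < a -> is_solution p c a x x1 x2 ->
  0 < I0 -> 0 < I1 ->
  is_lim (fun T => RInt (gI (2 * p + 1) (Kc p c a) 0) 0 T) p_infty I0 ->
  is_lim (fun T => RInt (gI (2 * p + 1) (Kc p c a) 1) 0 T) p_infty I1 ->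
  (forall T, 0 <= T -> RInt (gI (p + 1) (Lc p c (a * I0)) 0) 0 T <= J) ->
  forall t, 0 <= t -> x1 t <= a * (I1 / I0) + a * J.
Proof.
  intros hp hc ha Hs HI0p HI1p HI0 HI1 HJ.
  pose proof (stepA p c a x x1 x2 hp hc ha Hs) as HA.
  pose proof (stepB p c a x x1 x2 hp hc ha Hs) as HB.
  destruct (stepD p c a x x1 x2 I0 I1 hp hc ha Hs HI0 HI1) as [_ HD].
  destruct Hs as [Hx [Hx1 [Hx2 [Cx [Cx1 [Cx2 [E0 [E1 E2]]]]]]]].
  set (T := I1 / I0). set (S := a * I0). set (L := Lc p c S).
  assert (HT : 0 < T) by (unfold T, Rdiv; apply Rmult_lt_0_compat; [lra| now apply Rinv_0_lt_compat]).
  assert (HS : 0 < S) by (unfold S; nra).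
  assert (HxS : forall t, T <= t -> S * (t - T) <= x t).
  { intros t Ht. replace (S * (t - T)) with (a * (I0 * t - I1)) by (unfold S, T; field; lra). apply HD; lra. }
  set (Psi := fun u => RInt (gI (p + 1) L 0) 0 u).
  assert (Hp1 : 1 <= p + 1) by lra.
  assert (DPsi : forall u, is_derive Psi u (gI (p + 1) L 0 u)) by (intros; now apply F_der).
  assert (J0 : 0 <= J) by (rewrite <- (RInt0 (gI (p + 1) L 0)); apply HJ; lra).
  assert (Hx1m : forall s t, 0 <= s -> s <= t -> x1 s <= x1 t).
  { apply (mono_gen x1 x2 0); auto. intros s Hs; destruct (HA s); lra. }
  set (y := fun t => x2 t * exp (L * rpow (t - T) (p + 1))).
  assert (Hy : forall t, T <= t -> y t <= y T).
  { intros t Ht. cut (0 - y T <= 0 - y t). lra.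
    apply (mono_gen (fun t => 0 - y t)
      (fun t => 0 - (- (c * rpow (x t) p * x2 t) * exp (L * rpow (t - T) (p + 1)) +
                x2 t * (L * ((p + 1) * Rpower (t - T) (p + 1 - 1)) * exp (L * rpow (t - T) (p + 1))))) T); auto; try lra.
    - intros s Hs. apply (der_minus (fun _ => 0) y). apply der_const.
      unfold y. apply (der_mult x2 (fun t => exp (L * rpow (t - T) (p + 1)))). apply Hx2; lra.
      apply (der_exp (fun t => L * rpow (t - T) (p + 1))).
      apply (der_shift (fun u => L * rpow u (p + 1))). apply rpow_der_scal. lra.
    - intros s Hs.
      replace (p + 1 - 1) with p by ring.
      assert (EL : L * (p + 1) = c * Rpower S p) by (unfold L, Lc; field; lra).
      assert (Hr : rpow (S * (s - T)) p <= rpow (x s) p) by (apply rpow_le; [apply HxS; lra| lra]).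
      rewrite rpow_pos in Hr by (apply Rmult_lt_0_compat; lra).
      rewrite <- Rpower_mult_distr in Hr by lra.
      destruct (HA s) as [H1 _]; [lra|].
      assert (0 < exp (L * rpow (s - T) (p + 1))) by apply exp_pos.
      assert (0 <= x2 s * exp (L * rpow (s - T) (p + 1)) * (c * (rpow (x s) p - Rpower S p * Rpower (s - T) p))).
      { apply Rmult_le_pos; [apply Rmult_le_pos; lra|]. apply Rmult_le_pos; lra. }
      replace (L * ((p + 1) * Rpower (s - T) p)) with (c * Rpower S p * Rpower (s - T) p)
        by (rewrite <- EL; ring).
      replace (0 - (- (c * rpow (x s) p * x2 s) * exp (L * rpow (s - T) (p + 1)) +
        x2 s * (c * Rpower S p * Rpower (s - T) p * exp (L * rpow (s - T) (p + 1)))))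
      with (x2 s * exp (L * rpow (s - T) (p + 1)) * (c * (rpow (x s) p - Rpower S p * Rpower (s - T) p))) by ring.
      lra.
    - apply (rc_minus (fun _ => 0) y T (rc_const 0 T)). apply rc_cont. unfold y.
      apply cont_mult. apply (der_cont _ _ _ (Hx2 T HT)).
      apply cont_exp. apply (cont_shift (fun u => L * rpow u (p + 1))).
      apply cont_mult; [apply continuous_const| apply rpow_cont; lra]. }
  assert (HyT : y T = x2 T) by (unfold y; rewrite Rminus_diag, rpow_nonpos, Rmult_0_r, exp_0 by lra; ring).
  assert (Hx2b : forall t, T <= t -> x2 t <= a * gI (p + 1) L 0 (t - T)).
  { intros t Ht. specialize (Hy t Ht). rewrite HyT in Hy. unfold y in Hy.
    destruct (HA T) as [_ HaT]; [lra|].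
    assert (0 < exp (- (L * rpow (t - T) (p + 1)))) by apply exp_pos.
    unfold gI; simpl. rewrite Rmult_1_l.
    apply Rle_trans with (x2 t * exp (L * rpow (t - T) (p + 1)) * exp (- (L * rpow (t - T) (p + 1)))).
    rewrite Rmult_assoc, <- exp_plus, Rplus_opp_r, exp_0. lra.
    apply Rmult_le_compat_r; lra. }
  assert (HD2 : forall t, T <= t -> a * Psi (T - T) - x1 T <= a * Psi (t - T) - x1 t).
  { intros t Ht.
    apply (mono_gen (fun t => a * Psi (t - T) - x1 t) (fun t => a * gI (p + 1) L 0 (t - T) - x2 t) T); auto; try lra.
    - intros s Hs. apply (der_minus (fun t => a * Psi (t - T)) x1); [|apply Hx1; lra].
      apply (is_derive_scal (fun t => Psi (t - T))). apply (der_shift Psi). apply DPsi.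
    - intros s Hs. specialize (Hx2b s ltac:(lra)). lra.
    - apply (rc_cont (fun t => a * Psi (t - T) - x1 t) T). apply (continuous_minus (V:=R_NormedModule) (fun t => a * Psi (t - T)) x1).
      apply cont_mult; [apply continuous_const|]. apply cont_shift. eapply der_cont; apply DPsi.
      eapply der_cont; apply Hx1; lra. }
  intros t Ht.
  destruct (HB T) as [HbT _]; [lra|].
  destruct (Rle_or_lt T t) as [Htt|Htt].
  - specialize (HD2 t Htt). rewrite Rminus_diag in HD2. unfold Psi in HD2 at 1. rewrite RInt0 in HD2.
    assert (Psi (t - T) <= J) by (apply HJ; lra).
    assert (a * Psi (t - T) <= a * J) by (apply Rmult_le_compat_l; lra).
    fold T. lra.
  - assert (x1 t <= x1 T) by (apply Hx1m; lra).
    assert (0 <= a * J) by (apply Rmult_le_pos; lra). fold T. lra.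
Qed.

Ltac pos := repeat (apply Rmult_lt_0_compat || apply Rinv_0_lt_compat || apply exp_pos || apply Rpower_pos
   || (unfold Rdiv; apply Rmult_lt_0_compat)); try lra.

Lemma ln_Kc p c a : 0 < c -> 0 < a -> 0 < p ->
  ln (Kc p c a) = ln c + p * ln a - p * ln 2 - ln (2 * p + 1).
Proof.
  intros hc ha hp. unfold Kc. rewrite ln_div by pos. rewrite !ln_mult by pos.
  rewrite !ln_Rpower. ring.
Qed.

Lemma ln_X p c : 0 < c -> 0 < p ->
  ln (Rpower 2 p / (c * Rpower (2 * p + 1) (2 * p))) = p * ln 2 - ln c - 2 * p * ln (2 * p + 1).
Proof.
  intros hc hp. rewrite ln_div by pos. rewrite ln_mult by pos. rewrite !ln_Rpower. ring.
Qed.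

Lemma ln_Y p c : 0 < c -> ln (Rpower 2 p / c) = p * ln 2 - ln c.
Proof. intros hc. rewrite ln_div by pos. rewrite ln_Rpower. ring. Qed.

Lemma alg1 p c a : 1 <= p -> 0 < c -> 0 < a ->
  (2 * p + 1) * Rpower (Kc p c a) (1 / (2 * p + 1)) *
  Rpower (Rpower 2 p / (c * Rpower (2 * p + 1) (2 * p))) (1 / (2 * p + 1)) *
  Rpower a ((p + 1) / (2 * p + 1)) = a.
Proof.
  intros hp hc ha. apply ln_inv; [pos|lra|].
  rewrite !ln_mult by pos. rewrite !ln_Rpower. rewrite ln_Kc, ln_X by lra. field. lra.
Qed.

Lemma alg2 p c a : 1 <= p -> 0 < c -> 0 < a ->
  Rpower (Kc p c a) (2 / (2 * p + 1)) * Rpower (2 * p + 1) ((1 - 2 * p) / (2 * p + 1)) *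
  Rpower (Rpower 2 p / c) (2 / (2 * p + 1)) * Rpower a ((p + 1) / (2 * p + 1)) =
  a * (Rpower (Kc p c a) (1 / (2 * p + 1)) *
       Rpower (Rpower 2 p / (c * Rpower (2 * p + 1) (2 * p))) (1 / (2 * p + 1))).
Proof.
  intros hp hc ha. apply ln_inv; [pos|pos|].
  rewrite !ln_mult by pos. rewrite !ln_Rpower. rewrite ln_Kc, ln_X, ln_Y by lra. field. lra.
Qed.

Lemma alg3 p c a c2 : 1 <= p -> 0 < c -> 0 < a -> 0 < c2 ->
  (p + 1) * Rpower (Lc p c (c2 * Rpower a ((p + 1) / (2 * p + 1)))) (1 / (p + 1)) * Rpower a ((p + 1) / (2 * p + 1))
  = a * (Rpower c (1 / (p + 1)) * Rpower (c2 * (p + 1)) (p / (p + 1))).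
Proof.
  intros hp hc ha hc2. apply ln_inv; [pos|pos|].
  unfold Lc. rewrite !ln_mult by pos. rewrite !ln_Rpower. rewrite ln_div by pos.
  rewrite ln_mult by pos. rewrite ln_Rpower. rewrite ln_mult by pos. rewrite ln_Rpower. rewrite (ln_mult c2) by lra. field. lra.
Qed.

Theorem lemma4 (p c : R) (hp : 1 <= p) (hc : 0 < c) :
  forall (a : R) (x x1 x2 : R -> R),
    0 < a ->
    is_solution p c a x x1 x2 ->
    exists h : R,
      is_lim x1 p_infty h /\
      const2 p c * Rpower a ((p + 1) / (2 * p + 1)) <= h /\
      h <= const1 p c * Rpower a ((p + 1) / (2 * p + 1)).
Proof.
  intros a x x1 x2 ha Hs.
  assert (hp0 : 0 < p) by lra.
  assert (HK : 0 < Kc p c a) by (unfold Kc; pos).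
  destruct (F_lim (2 * p + 1) (Kc p c a) 0 ltac:(lra) HK ltac:(lia)) as [I0 [I0p [HI0 HI0b]]].
  destruct (F_lim (2 * p + 1) (Kc p c a) 1 ltac:(lra) HK ltac:(lia)) as [I1 [I1p [HI1 HI1b]]].
  assert (HL : 0 < Lc p c (a * I0)) by (unfold Lc; pos).
  destruct (F_lim (p + 1) (Lc p c (a * I0)) 0 ltac:(lra) HL ltac:(lia)) as [J [Jp [HJ HJb]]].
  assert (G1 := gamma_eq (2 * p + 1) (Kc p c a) 0 (1 / (2 * p + 1)) I0 ltac:(lra) HK
                  ltac:(simpl; field; lra) HI0).
  assert (G2 := gamma_eq (2 * p + 1) (Kc p c a) 1 (2 / (2 * p + 1)) I1 ltac:(lra) HK
                  ltac:(simpl; field; lra) HI1).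
  assert (G3 := gamma_eq (p + 1) (Lc p c (a * I0)) 0 (1 / (p + 1)) J ltac:(lra) HL
                  ltac:(simpl; field; lra) HJ).
  pose proof (stepA p c a x x1 x2 hp hc ha Hs) as HA.
  destruct (stepD p c a x x1 x2 I0 I1 hp hc ha Hs HI0 HI1) as [HD1 _].
  pose proof (stepE p c a x x1 x2 I0 I1 J hp hc ha Hs I0p I1p HI0 HI1 HJb) as HE.
  destruct Hs as [Hx [Hx1 [Hx2 [Cx [Cx1 [Cx2 [E0 [E1 E2]]]]]]]].
  set (B := a * (I1 / I0) + a * J).
  assert (Hm1 : forall s t, 0 <= s -> s <= t -> x1 s <= x1 t).
  { apply (mono_gen x1 x2 0); auto. intros s Hs; destruct (HA s); lra. }
  destruct (lim_of_mono x1 B Hm1 HE) as [h [Hh Hhb]].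
  exists h. split; [exact Hh|].
  assert (Hup : h <= B).
  { apply (lim_le x1 (fun _ => B) h B 0 Hh (is_lim_const B p_infty)). intros t Ht. apply HE; lra. }
  assert (Hlow : a * I0 <= h).
  { apply (lim_le (fun t => a * RInt (gI (2 * p + 1) (Kc p c a) 0) 0 t) x1 (a * I0) h 0).
    apply lim_scal; auto. exact Hh. intros t Ht. apply HD1; lra. }
  set (A := Rpower a ((p + 1) / (2 * p + 1))).
  assert (HA0 : 0 < A) by apply Rpower_pos.
  assert (A1 : const2 p c * A = a * I0).
  { unfold const2. rewrite G1. pose proof (alg1 p c a hp hc ha) as E. fold A in E.
    set (K1 := Rpower (Kc p c a) (1 / (2 * p + 1))) in *.
    set (X1 := Rpower (Rpower 2 p / (c * Rpower (2 * p + 1) (2 * p))) (1 / (2 * p + 1))) in *.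
    transitivity ((2 * p + 1) * K1 * X1 * A * I0); [ring|]. rewrite E. ring. }
  assert (Hc2 : 0 < const2 p c).
  { destruct (Rle_or_lt (const2 p c) 0) as [H|H]; auto.
    assert (const2 p c * A <= 0) by (apply Rmult_le_0_r; lra). nra. }
  assert (A2 : const3 p c / const2 p c * A = a * (I1 / I0)).
  { unfold const3, const2. rewrite G1, G2. pose proof (alg2 p c a hp hc ha) as E. fold A in E.
    set (K1 := Rpower (Kc p c a) (1 / (2 * p + 1))) in *.
    set (K2 := Rpower (Kc p c a) (2 / (2 * p + 1))) in *.
    set (X1 := Rpower (Rpower 2 p / (c * Rpower (2 * p + 1) (2 * p))) (1 / (2 * p + 1))) in *.
    set (Q := Rpower (2 * p + 1) ((1 - 2 * p) / (2 * p + 1))) in *.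
    set (Y := Rpower (Rpower 2 p / c) (2 / (2 * p + 1))) in *.
    assert (0 < K1) by apply Rpower_pos. assert (0 < X1) by apply Rpower_pos.
    transitivity ((I1 / I0) * (K2 * Q * Y * A) / (K1 * X1)).
    field; repeat split; lra.
    rewrite E. field; repeat split; lra. }
  assert (A3 : Gamma (1 / (p + 1)) / (Rpower c (1 / (p + 1)) * Rpower (const2 p c * (p + 1)) (p / (p + 1))) * A
               = a * J).
  { rewrite G3. rewrite <- A1. pose proof (alg3 p c a (const2 p c) hp hc ha Hc2) as E. fold A in E.
    set (L1 := Rpower (Lc p c (const2 p c * A)) (1 / (p + 1))) in *.
    set (D := Rpower c (1 / (p + 1)) * Rpower (const2 p c * (p + 1)) (p / (p + 1))) in *.
    assert (0 < D) by (unfold D; pos).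
    transitivity (J * ((p + 1) * L1 * A) / D). field; lra.
    rewrite E. field; lra. }
  split.
  - fold A. lra.
  - fold A. replace (const1 p c * A) with
      (const3 p c / const2 p c * A +
       Gamma (1 / (p + 1)) / (Rpower c (1 / (p + 1)) * Rpower (const2 p c * (p + 1)) (p / (p + 1))) * A)
      by (unfold const1; ring).
    rewrite A2, A3. unfold B in Hup. lra.
Qed.
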